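(* Let $\Gamma$ be a set of clauses with designated blocking variables. If a clause $C$ is cost-SR w.r.t. $\Gamma$, then $\mathrm{cost}(\Gamma)=\mathrm{cost}(\Gamma\cup\{C\})$.
   Context: Substitutions map variables to $0$, $1$ or literals ($\sigma(\lnot x)=\lnot\sigma(x)$, $\sigma(0)=0$, $\sigma(1)=1$); $(\sigma\circ\tau)(x)=\sigma(\tau(x))$; total assignments assign Boolean values to all variables. $C{\upharpoonright}_\sigma$: apply $\sigma$ to the literals and simplify ($D\lor0=D$, $D\lor1=1$, merge repeats); $\sigma\models C$ if the result is $1$ or tautological; $\Gamma{\upharpoonright}_\sigma$ is the multiset of $C{\upharpoonright}_\sigma\ne1$, $C\in\Gamma$. $\lnot C$ is the partial assignment falsifying all literals of $C$; $\tau\supseteq\rho$ means extension. $\Gamma\vdash_1 C$ means unit propagation on $\Gamma{\upharpoonright}_{\lnot C}$ derives the empty clause; $\Gamma\vdash_1\Delta$ means this for all $D\in\Delta$. With blocking variables $b_1,\dots,b_m$: $\mathrm{cost}(\alpha)=\sum_i\alpha(b_i)$, $\mathrm{cost}(\Gamma)=\min\{\mathrm{cost}(\alpha):\alpha\models\Gamma\}$. $C$ is cost-SR w.r.t. $\Gamma$ if there is a substitution $\sigma$ with (1) $\Gamma{\upharpoonright}_{\lnot C}\vdash_1(\Gamma\cup\{C\}){\upharpoonright}_\sigma$ and (2) $\mathrm{cost}(\tau\circ\sigma)\le\mathrm{cost}(\tau)$ for every total assignment $\tau\supseteq\lnot C$. *)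

(* Defs.v *)
From mathcomp Require Import all_boot.
Set Implicit Arguments. Unset Strict Implicit. Unset Printing Implicit Defensive.

(** Variables are natural numbers.  A literal is a pair (x, s): the literal x
    if s = true, the literal ~x if s = false. *)
Definition var := nat.
Definition lit := (nat * bool)%type.
Definition lit_var (l : lit) : var := l.1.
Definition lit_neg (l : lit) : lit := (l.1, ~~ l.2).

(** A clause is a disjunction of literals (a list; repeats are harmless).
    A formula (set of clauses) is a list of clauses (a multiset). *)
Definition clause := seq lit.
Definition cnf := seq clause.

Definition assignment := var -> bool.
Definition eval_lit (a : assignment) (l : lit) : bool := a l.1 == l.2.
Definition sat_clause (a : assignment) (C : clause) : bool := has (eval_lit a) C.
Definition sat (a : assignment) (G : cnf) : Prop := forall C, C \in G -> sat_clause a C.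

Inductive term := TConst of bool | TLit of lit.
Definition subst := var -> term.

Definition term_neg (t : term) : term :=
  match t with TConst b => TConst (~~ b) | TLit l => TLit (lit_neg l) end.

Definition subst_lit (s : subst) (l : lit) : term :=
  if l.2 then s l.1 else term_neg (s l.1).

Definition eval_term (a : assignment) (t : term) : bool :=
  match t with TConst b => b | TLit l => eval_lit a l end.
Definition comp_assign (a : assignment) (s : subst) : assignment :=
  fun x => eval_term a (s x).

(** C|sigma: apply sigma to the literals and simplify (D v 0 = D, D v 1 = 1,
    merge repeats).  [None] stands for the constant 1; [Some D] for the clause D
    (the empty clause [Some [::]] is the constant 0). *)
Definition restrict_clause (s : subst) (C : clause) : option clause :=
  let ts := map (subst_lit s) C in
  if has (fun t => if t is TConst true then true else false) ts then None
  else Some (undup (pmap (fun t => match t with TLit l => Some l | TConst _ => None end) ts)).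

Definition restrict (s : subst) (G : cnf) : cnf := pmap (restrict_clause s) G.

Definition tautological (C : clause) : bool := has (fun l => lit_neg l \in C) C.

(** ~C, the (partial) assignment falsifying all literals of C, viewed as a
    substitution (identity on variables not occurring in C).  For a
    tautological C the assignment is inconsistent; this case is handled
    separately wherever it matters. *)
Definition neg_subst (C : clause) : subst :=
  fun x => if (x, true) \in C then TConst false
           else if (x, false) \in C then TConst true
           else TLit (x, true).

Definition extends_neg (a : assignment) (C : clause) : Prop :=
  forall l, l \in C -> eval_lit a l = false.

Definition unit_subst (l : lit) : subst :=
  fun x => if x == l.1 then TConst l.2 else TLit (x, true).

Inductive up_refutes : cnf -> Prop :=
| up_empty (D : cnf) : [::] \in D -> up_refutes D
| up_step (D : cnf) (l : lit) :
    [:: l] \in D -> up_refutes (restrict (unit_subst l) D) -> up_refutes D.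

(** Gamma |-_1 C: unit propagation on Gamma|~C derives the empty clause.
    (If C is tautological, ~C is contradictory and this holds trivially.) *)
Definition up_implies (G : cnf) (C : clause) : Prop :=
  tautological C \/ up_refutes (restrict (neg_subst C) G).

Definition up_implies_all (G : cnf) (D : cnf) : Prop :=
  forall C, C \in D -> up_implies G C.

Definition cost (bs : seq var) (a : assignment) : nat :=
  sumn [seq nat_of_bool (a b) | b <- bs].

(** cost(Gamma) = min { cost a | a |= Gamma }, with [None] = +infinity
    (the minimum of the empty set, when Gamma is unsatisfiable).
    [is_cost bs G c] means cost(G) = c. *)
Definition is_cost (bs : seq var) (G : cnf) (c : option nat) : Prop :=
  match c with
  | Some k => (exists a, sat a G /\ cost bs a = k) /\
              (forall a, sat a G -> k <= cost bs a)
  | None => forall a, ~ sat a G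
  end.

Definition cost_SR (bs : seq var) (G : cnf) (C : clause) : Prop :=
  exists s : subst,
    up_implies_all (restrict (neg_subst C) G) (restrict s (C :: G)) /\
    (forall tau : assignment, extends_neg tau C ->
       cost bs (comp_assign tau s) <= cost bs tau).

(* Main.v *)
Require Import Defs.
From mathcomp Require Import all_boot.

Lemma eval_comp a s (l : lit) :
  eval_lit (comp_assign a s) l = eval_term a (subst_lit s l).
Proof.
case: l => x [] /=; rewrite /eval_lit /comp_assign /subst_lit /=.
- by case: (s x) => [b|[y t]] /=; rewrite ?eqb_id.
- case: (s x) => [b|[y t]] /=; rewrite /eval_lit /lit_neg /=.
  + by case: b.
  + by case: (a y); case: t.
Qed.

Lemma restrict_sat a s (D : clause) :
  sat_clause (comp_assign a s) D =
  (if restrict_clause s D is Some D' then sat_clause a D' else true).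
Proof.
rewrite /sat_clause /restrict_clause (eq_has (eval_comp a s)) -has_map.
case: ifP => H.
- elim: (map (subst_lit s) D) H => [|t ts IH] //=.
  case: t => [[]|l] //= H; try exact: IH; by rewrite IH ?orbT.
- rewrite has_undup; elim: (map (subst_lit s) D) H => [|t ts IH] //=.
  case: t => [[]|l] //= H; try exact: IH; by rewrite IH.
Qed.

Lemma sat_ext a b D : a =1 b -> sat_clause a D = sat_clause b D.
Proof. by move=> E; apply: eq_has => l; rewrite /eval_lit E. Qed.

Lemma sat_restrict a s G : a =1 comp_assign a s -> sat a G -> sat a (restrict s G).
Proof.
move=> E H D; rewrite /restrict mem_pmap => /mapP [D0 HD0 ED].
have := H D0 HD0; by rewrite (@sat_ext _ _ D0 E) restrict_sat -ED.
Qed.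

Lemma neg_subst_id a C : extends_neg a C -> a =1 comp_assign a (neg_subst C).
Proof.
move=> E x; rewrite /comp_assign /neg_subst.
case: ifP => [H1|_]; first by have := E _ H1; rewrite /eval_lit /=; case: (a x).
case: ifP => [H2|_]; first by have := E _ H2; rewrite /eval_lit /=; case: (a x).
by rewrite /= /eval_lit /= eqb_id.
Qed.

Lemma up_sound F : up_refutes F -> forall a, ~ sat a F.
Proof.
elim => [D HD|D l Hl _ IH] a H; first by have := H _ HD.
apply: (IH a); apply: sat_restrict (H) => x.
have := H _ Hl; rewrite /sat_clause /= orbF /eval_lit => /eqP E.
rewrite /comp_assign /unit_subst; case: eqP => [->|_] /=; first by rewrite E.
by rewrite /eval_lit eqb_id.
Qed.

Lemma up_implies_sound a F D : sat a F -> up_implies F D -> sat_clause a D.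
Proof.
move=> H [T|R].
- case/hasP: T => l Hl Hn; apply/hasP.
  case E: (eval_lit a l); first by exists l.
  exists (lit_neg l) => //; move: E; rewrite /eval_lit /lit_neg /=.
  by case: (a l.1); case: l.2.
- case S: (sat_clause a D) => //; exfalso.
  refine (@up_sound _ R a _); apply: sat_restrict (H); apply: neg_subst_id.
  move=> l Hl; apply/negP => El; move/negP: S; apply; apply/hasP; by exists l.
Qed.

Lemma step bs G C : cost_SR bs G C -> forall a, sat a G ->
  exists a', sat a' (C :: G) /\ cost bs a' <= cost bs a.
Proof.
move=> [s [Hup Hc]] a H.
case S: (sat_clause a C).
- exists a; split => //; move=> D; rewrite inE => /orP [/eqP -> //|]; exact: H.
- have EN : extends_neg a C.
    move=> l Hl; apply/negP => El; move/negP: S; apply; apply/hasP; by exists l.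
  exists (comp_assign a s); split; last exact: Hc.
  have HF : sat a (restrict (neg_subst C) G).
    by apply: sat_restrict (H); apply: neg_subst_id.
  move=> D HD; rewrite restrict_sat.
  case E: (restrict_clause s D) => [D'|] //=.
  apply: (up_implies_sound _ _ _ HF); apply: Hup.
  by rewrite /restrict mem_pmap; apply/mapP; exists D.
Qed.

Theorem lemma3p7 (bs : seq var) (G : cnf) (C : clause) :
  cost_SR bs G C -> forall c : option nat, is_cost bs G c <-> is_cost bs (C :: G) c.
Proof.
move=> HS.
have sub : forall a, sat a (C :: G) -> sat a G.
  by move=> a H D HD; apply: H; rewrite inE HD orbT.
case => [k|] /=; split.
- move=> [[a [Ha Ca]] Hm]; split.
  + have [a' [Ha' Ca']] := step _ _ _ HS _ Ha; exists a'; split => //.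
    apply/eqP; rewrite eqn_leq -Ca Ca' /= Ca; exact: Hm (sub _ Ha').
  + by move=> b Hb; apply: Hm; apply: sub.
- move=> [[a [Ha Ca]] Hm]; split; first by exists a; split => //; apply: sub.
  move=> b Hb; have [a' [Ha' Ca']] := step _ _ _ HS _ Hb.
  exact: leq_trans (Hm _ Ha') Ca'.
- by move=> H a Ha; apply: (H a); apply: sub.
- move=> H a Ha; have [a' [Ha' _]] := step _ _ _ HS _ Ha; exact: H Ha'.
Qed.
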